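(* Let $\mathbb{X}$ be a finite set, $\mathcal{H}_A$ a finite-dimensional Hilbert space, and $\{\rho_A^x\}_{x\in\mathbb{X}}$ density operators on $\mathcal{H}_A$. Then \[ \mathcal{Q}(X\rightarrow A)_{\rho_A}\leq\mathcal{B}(X\rightarrow A)_{\rho_A}\leq\mathcal{R}(X\rightarrow A)_{\rho_A}. \]
   Context: All logarithms are base 2. $\Delta(\mathbb{X})$ is the set of probability mass functions on $\mathbb{X}$. For a density operator $\rho$ and positive semi-definite $\sigma$, $\widetilde{D}_\infty(\rho\|\sigma)=\log\big(\inf\{\mu\in\mathbb{R}:\rho\leq\mu\sigma\}\big)$ ($+\infty$ if the support of $\rho$ is not contained in that of $\sigma$). Maximal quantum leakage: $\mathcal{Q}(X\rightarrow A)_{\rho_A}=\sup_{\{F_y\}_{y\in\mathbb{Y}}}\log\big(\sum_{y\in\mathbb{Y}}\max_{x\in\mathbb{X}}\operatorname{tr}(\rho_A^xF_y)\big)$, the supremum over all POVMs on $\mathcal{H}_A$ with arbitrary finite outcome set $\mathbb{Y}$. Barycentric quantum Rényi leakage: $\mathcal{B}(X\rightarrow A)_{\rho_A}=\min_{\pi\in\Delta(\mathbb{X})}\max_{x\in\mathbb{X}}\widetilde{D}_\infty\big(\rho_A^x\,\|\,\sum_{x'}\pi(x')\rho_A^{x'}\big)$. Pairwise quantum Rényi leakage: $\mathcal{R}(X\rightarrow A)_{\rho_A}=\max_{x,x'\in\mathbb{X}}\widetilde{D}_\infty(\rho_A^x\|\rho_A^{x'})$. *)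

(* Defs.v *)
From mathcomp Require Import all_boot all_order all_algebra.
From mathcomp Require Import all_classical all_reals all_analysis.
From mathcomp Require Import complex.
Set Implicit Arguments. Unset Strict Implicit. Unset Printing Implicit Defensive.
Import Order.TTheory GRing.Theory Num.Theory.
Local Open Scope ring_scope.
Local Open Scope classical_set_scope.
Local Open Scope complex_scope.
Local Open Scope ring_scope.

(* A finite-dimensional Hilbert space H_A is C^n, C = R[i] (R : realType);
   operators on it are n x n complex matrices. *)

Definition log2 {R : realType} (x : R) : R := ln x / ln 2.

Definition adj {R : realType} {m n : nat} (A : 'M[R[i]]_(m, n)) : 'M[R[i]]_(n, m) :=
  map_mx Num.conj A^T.

(* positive semi-definite: <v, A v> >= 0 for every vector v
   (in the order of the numClosedField R[i], this means real and nonnegative) *)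
Definition psd {R : realType} {n : nat} (A : 'M[R[i]]_n) : Prop :=
  forall v : 'cV[R[i]]_n, 0 <= (adj v *m A *m v) ord0 ord0.

Definition loewner_le {R : realType} {n : nat} (A B : 'M[R[i]]_n) : Prop :=
  psd (B - A).

Definition density {R : realType} {n : nat} (rho : 'M[R[i]]_n) : Prop :=
  psd rho /\ \tr rho = 1.

(* POVM with outcome set 'I_m (every finite outcome set is in bijection with some 'I_m) *)
Definition povm {R : realType} {n m : nat} (F : 'I_m -> 'M[R[i]]_n) : Prop :=
  (forall y, psd (F y)) /\ \sum_(y < m) F y = 1%:M.

(* max-relative (sandwiched Renyi infinity) divergence:
   log (inf {mu in R : rho <= mu sigma}), +oo if this set is empty
   (which happens exactly when supp rho is not contained in supp sigma). *)
Definition Dinf {R : realType} {n : nat} (rho sigma : 'M[R[i]]_n) : \bar R :=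
  let S := [set mu : R | loewner_le rho (mu%:C *: sigma)] in
  if `[< S != set0 >] then ((log2 (inf S))%:E)%E else (+oo)%E.

Definition maxQleak {R : realType} {X : finType} {n : nat}
    (rho : X -> 'M[R[i]]_n) : \bar R :=
  ereal_sup [set v : \bar R | exists (m : nat) (F : 'I_m -> 'M[R[i]]_n),
     povm F /\
     v = ((log2 (\sum_(y < m) \big[Num.max/0]_(x : X)
                     complex.Re (\tr (rho x *m F y))))%:E)%E].

Definition pmf {R : realType} {X : finType} (pi : X -> R) : Prop :=
  (forall x, 0 <= pi x) /\ \sum_(x : X) pi x = 1.

Definition baryQleak {R : realType} {X : finType} {n : nat}
    (rho : X -> 'M[R[i]]_n) : \bar R :=
  ereal_inf [set v : \bar R | exists pi : X -> R, pmf pi /\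
     v = (\big[Order.max/-oo]_(x : X)
             Dinf (rho x) (\sum_(x' : X) (pi x')%:C *: rho x'))%E].

Definition pairQleak {R : realType} {X : finType} {n : nat}
    (rho : X -> 'M[R[i]]_n) : \bar R :=
  (\big[Order.max/-oo]_(x : X) \big[Order.max/-oo]_(x' : X) Dinf (rho x) (rho x'))%E.

(* Main.v *)
Set Warnings "-all".
Require Import Defs.
From mathcomp Require Import all_boot all_order all_algebra.
From mathcomp Require Import all_classical all_reals all_analysis.
From mathcomp Require Import complex.
From mathcomp Require Import lra.
Set Implicit Arguments. Unset Strict Implicit. Unset Printing Implicit Defensive.
Import Order.TTheory GRing.Theory Num.Theory.
Local Open Scope complex_scope.
Local Open Scope ring_scope.

Section Q.
Variable R : realType.
Local Notation C := R[i].

Definition bf n (A : 'M[C]_n) (u w : 'cV[C]_n) : C := (adj u *m A *m w) ord0 ord0.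

Lemma adjD n m (u w : 'M[C]_(n,m)) : adj (u + w) = adj u + adj w.
Proof. by apply/matrixP => i j; rewrite !mxE rmorphD. Qed.

Lemma adjZ n m a (u : 'M[C]_(n,m)) : adj (a *: u) = (Num.conj a) *: adj u.
Proof. by apply/matrixP => i j; rewrite !mxE rmorphM. Qed.

Lemma adjM n m p (u : 'M[C]_(n,m)) (w : 'M[C]_(m,p)) : adj (u *m w) = adj w *m adj u.
Proof. by rewrite /adj trmx_mul map_mxM. Qed.

Lemma adjK n m (u : 'M[C]_(n,m)) : adj (adj u) = u.
Proof. by apply/matrixP => i j; rewrite !mxE conjCK. Qed.

Lemma bfDl n (A : 'M[C]_n) u v w : bf A (u + v) w = bf A u w + bf A v w.
Proof. by rewrite /bf adjD !mulmxDl mxE. Qed.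
Lemma bfDr n (A : 'M[C]_n) u v w : bf A u (v + w) = bf A u v + bf A u w.
Proof. by rewrite /bf !mulmxDr mxE. Qed.
Lemma bfZl n (A : 'M[C]_n) a u w : bf A (a *: u) w = Num.conj a * bf A u w.
Proof. by rewrite /bf adjZ -!scalemxAl mxE. Qed.
Lemma bfZr n (A : 'M[C]_n) a u w : bf A u (a *: w) = a * bf A u w.
Proof. by rewrite /bf -!scalemxAr mxE. Qed.

Lemma adj_delta n (i : 'I_n) : adj (delta_mx i 0 : 'cV[C]_n) = delta_mx 0 i.
Proof.
apply/matrixP => a b; rewrite !mxE.
by case: (b == i); case: (a == 0); rewrite /= ?rmorph1 ?rmorph0.
Qed.

Lemma bf_delta n (A : 'M[C]_n) i j : bf A (delta_mx i 0) (delta_mx j 0) = A i j.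
Proof. by rewrite /bf adj_delta -rowE -colE !mxE. Qed.

Lemma bf_conj n (A Q : 'M[C]_n) u w : bf (adj Q *m A *m Q) u w = bf A (Q *m u) (Q *m w).
Proof. by rewrite /bf adjM !mulmxA. Qed.

Lemma psd_bf n (A : 'M[C]_n) v : psd A -> 0 <= bf A v v.
Proof. by move=> h; apply: h. Qed.

Lemma psd_herm n (A : 'M[C]_n) : psd A -> forall i j, Num.conj (A j i) = A i j.
Proof.
move=> hA i j.
set u : 'cV[C]_n := delta_mx i 0; set w : 'cV[C]_n := delta_mx j 0.
have h1 := psd_bf (u + w) hA.
have h2 := psd_bf (u + 'i%C *: w) hA.
have hu := psd_bf u hA. have hw := psd_bf w hA.
move: h1 h2 hu hw.
rewrite !bfDl !bfDr !bfZl !bfZr !bf_delta.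
case: (A i i) => [a b]; case: (A j j) => [c d]; case: (A i j) => [e f]; case: (A j i) => [g h].
rewrite !lecE /= => /andP[/eqP e1 _] /andP[/eqP e2 _] /andP[/eqP e3 _] /andP[/eqP e4 _].
apply/eqP; rewrite eq_complex /=; apply/andP; split; apply/eqP; lra.
Qed.

Lemma psd_tr n (A : 'M[C]_n) : psd A -> 0 <= \tr A.
Proof.
move=> hA; rewrite /mxtrace; apply: sumr_ge0 => i _.
by rewrite -bf_delta; apply: psd_bf.
Qed.

Lemma psd_trM n (A B : 'M[C]_n) : psd A -> psd B -> 0 <= \tr (A *m B).
Proof.
move=> hA hB.
have Bh : B \is normalmx.
  have e : (B ^t* )%sesqui = B.
    by apply/matrixP => i j; rewrite !mxE (psd_herm hB).
  by apply/normalmxP; rewrite e.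
have /orthomx_spectralP E := Bh.
set P := spectralmx B in E; set d := spectral_diag B in E.
have Pu : P \is unitarymx by apply: spectral_unitarymx.
have iP : invmx P = adj P by rewrite invmx_unitary.
have PP : P *m adj P = 1%:M by apply/unitarymxP.
rewrite iP in E.
have -> : \tr (A *m B) = \tr ((P *m A *m adj P) *m diag_mx d).
  by rewrite E !mulmxA mxtrace_mulC !mulmxA.
rewrite mul_mx_diag /mxtrace; apply: sumr_ge0 => i _; rewrite mxE.
apply: mulr_ge0.
  rewrite -bf_delta -{1}(adjK P) bf_conj; apply: psd_bf hA.
have -> : d 0 i = (adj (adj P) *m B *m adj P) i i.
  rewrite adjK E !mulmxA PP mul1mx -mulmxA PP mulmx1 mxE eqxx mulr1n //.
rewrite -bf_delta bf_conj; apply: psd_bf hB.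
Qed.


Lemma psdD n (A B : 'M[C]_n) : psd A -> psd B -> psd (A + B).
Proof. by move=> hA hB v; rewrite mulmxDr mulmxDl mxE addr_ge0. Qed.

Lemma psdZ n (A : 'M[C]_n) (c : R) : 0 <= c -> psd A -> psd (c%:C *: A).
Proof.
move=> hc hA v; rewrite -scalemxAr -scalemxAl mxE; apply: mulr_ge0 (hA v).
by rewrite ler0c.
Qed.

Lemma ReCM (c : R) (z : C) : complex.Re (c%:C * z) = c * complex.Re z.
Proof. by case: z => a b /=; rewrite mul0r subr0. Qed.

Lemma ge0_Re (z : C) : 0 <= z -> 0 <= complex.Re z.
Proof. by rewrite lecE => /andP[]. Qed.

Lemma Re_tr_le n (A B Fm : 'M[C]_n) : loewner_le A B -> psd Fm ->
  complex.Re (\tr (A *m Fm)) <= complex.Re (\tr (B *m Fm)).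
Proof.
move=> hAB hF; have := ge0_Re (psd_trM hAB hF).
by rewrite mulmxBl (raddfB (@mxtrace _ _)) raddfB /= subr_ge0.
Qed.

Lemma loewner_up n (A S : 'M[C]_n) (mu c : R) : loewner_le A (mu%:C *: S) ->
  psd S -> mu <= c -> loewner_le A (c%:C *: S).
Proof.
move=> h hS hmc; rewrite /loewner_le in h *.
have -> : c%:C *: S - A = (mu%:C *: S - A) + (c - mu)%:C *: S.
  by rewrite rmorphB /= scalerBl [RHS]addrC -addrA addKr.
by apply: psdD h (psdZ _ hS); rewrite subr_ge0.
Qed.

Lemma sum_Re_tr n m (S : 'M[C]_n) (Fm : 'I_m -> 'M[C]_n) :
  \sum_(y < m) Fm y = 1%:M ->
  \sum_(y < m) complex.Re (\tr (S *m Fm y)) = complex.Re (\tr S).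
Proof.
move=> hF; rewrite -raddf_sum /= -raddf_sum /= -mulmx_sumr hF mulmx1 //.
Qed.

Lemma lower1 (X : finType) n (rho : X -> 'M[C]_n) m (Fm : 'I_m -> 'M[C]_n) (x0 : X) :
  density (rho x0) -> povm Fm ->
  1 <= \sum_(y < m) \big[Num.max/0]_(x : X) complex.Re (\tr (rho x *m Fm y)).
Proof.
move=> [_ htr] [_ hF].
apply: le_trans (_ : \sum_(y < m) complex.Re (\tr (rho x0 *m Fm y)) <= _).
  by rewrite sum_Re_tr // htr.
apply: ler_sum => y _.
exact: (le_bigmax _ (fun x => complex.Re (\tr (rho x *m Fm y))) x0).
Qed.

Lemma tr_sigma (X : finType) n (rho : X -> 'M[C]_n) (pi : X -> R) :
  (forall x, density (rho x)) -> Defs.pmf pi ->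
  \tr (\sum_(x' : X) (pi x')%:C *: rho x') = 1.
Proof.
move=> hr [_ hpi]; rewrite raddf_sum /=.
under eq_bigr => x _ do rewrite mxtraceZ (proj2 (hr x)) mulr1.
by rewrite -rmorph_sum /= hpi.
Qed.

Lemma psd_sigma (X : finType) n (rho : X -> 'M[C]_n) (pi : X -> R) :
  (forall x, density (rho x)) -> Defs.pmf pi ->
  psd (\sum_(x' : X) (pi x')%:C *: rho x').
Proof.
move=> hr [hp _]; apply: (big_ind psd).
- by move=> v; rewrite mulmx0 mul0mx mxE.
- exact: psdD.
- by move=> x _; apply: psdZ (hp x) (proj1 (hr x)).
Qed.

Lemma S_ge1 (X : finType) n (rho : X -> 'M[C]_n) (pi : X -> R) x mu :
  (forall x, density (rho x)) -> Defs.pmf pi ->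
  loewner_le (rho x) (mu%:C *: \sum_(x' : X) (pi x')%:C *: rho x') -> 1 <= mu.
Proof.
move=> hr hpi h.
rewrite /loewner_le in h; have := ge0_Re (psd_tr h).
rewrite (raddfB (@mxtrace _ _)).
by rewrite /= mxtraceZ tr_sigma // (proj2 (hr x)) mulr1 raddfB /= subr_ge0.
Qed.

Lemma core (X : finType) n (rho : X -> 'M[C]_n) (pi : X -> R) m
  (Fm : 'I_m -> 'M[C]_n) (c : R) (x0 : X) :
  (forall x, density (rho x)) -> Defs.pmf pi -> povm Fm ->
  (forall x, loewner_le (rho x) (c%:C *: \sum_(x' : X) (pi x')%:C *: rho x')) ->
  \sum_(y < m) \big[Num.max/0]_(x : X) complex.Re (\tr (rho x *m Fm y)) <= c.
Proof.
move=> hr hpi [hF1 hF2] hc.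
set S := c%:C *: \sum_(x' : X) (pi x')%:C *: rho x'.
have hS : psd S by rewrite -(subrK (rho x0) S); apply: psdD (hc x0) (proj1 (hr x0)).
apply: le_trans (_ : \sum_(y < m) complex.Re (\tr (S *m Fm y)) <= c).
  apply: ler_sum => y _; apply: bigmax_le => [|x _].
    exact: ge0_Re (psd_trM hS (hF1 y)).
  exact: Re_tr_le (hc x) (hF1 y).
by rewrite sum_Re_tr // /S mxtraceZ tr_sigma // mulr1.
Qed.

End Q.

Theorem corollary2 (R : realType) (X : finType) (n : nat)
    (rho : X -> 'M[R[i]]_n)
    (hX : (0 < #|X|)%N)
    (hrho : forall x, density (rho x)) :
  (maxQleak rho <= baryQleak rho <= pairQleak rho)%E.
Proof.
have [x0 _] : exists x0 : X, true by case/card_gt0P: hX => x ?; exists x.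
apply/andP; split.
- rewrite /maxQleak; apply: ge_ereal_sup => v [m [Fm [hF ->]]].
  rewrite /baryQleak; apply/ereal_infP => w [pi [hpi ->]].
  set s := \sum_(y < m) _.
  set sigma := \sum_(x' : X) _.
  have s1 : 1 <= s := lower1 (hrho x0) hF.
  rewrite leNgt; apply/negP => hlt.
  have hx : forall x, exists mu, loewner_le (rho x) (mu%:C *: sigma) /\ mu < s.
    move=> x.
    have hD : (Dinf (rho x) sigma < (log2 s)%:E)%E.
      by apply: le_lt_trans hlt; apply: (le_bigmax _ (fun x => Dinf (rho x) sigma) x).
    move: hD; rewrite /Dinf; set S := ([set mu : R | loewner_le (rho x) (mu%:C *: sigma)])%classic.
    case: asboolP => [hne|_]; last by rewrite ltNge leey.
    rewrite lte_fin => hl.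
    have hne' : (S !=set0)%classic := proj1 (set0P S) hne.
    have hinf : 1 <= inf S.
      by apply: lb_le_inf hne' _ => mu hmu; exact: S_ge1 hrho hpi hmu.
    have hinfs : inf S < s.
      have l2 : 0 < ln (2 : R) by apply: ln_gt0; lra.
      move: hl; rewrite /log2 ltr_pM2r ?invr_gt0 // ltr_ln ?posrE //; lra.
    have [mu hmu lt] := inf_lt hne' hinfs.
    by exists mu.
  have [f hf] := fin_all_exists hx.
  set c := \big[Num.max/f x0]_(x : X) f x.
  have hcs : c < s.
    by apply: bigmax_lt => [|x _]; [exact: (proj2 (hf x0)) | exact: (proj2 (hf x))].
  have : s <= c.
    apply: (core x0 hrho hpi hF) => x.
    apply: loewner_up (proj1 (hf x)) (psd_sigma hrho hpi) _.
    exact: (le_bigmax _ f x).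
  by rewrite leNgt hcs.
- set pi0 := fun x : X => if x == x0 then (1 : R) else 0.
  have hpi0 : Defs.pmf pi0.
    split => [x|]; first by rewrite /pi0; case: ifP.
    rewrite (bigD1 x0) //= /pi0 eqxx big1 ?addr0 // => x /negbTE -> //.
  have hsig : \sum_(x' : X) (pi0 x')%:C *: rho x' = rho x0.
    rewrite (bigD1 x0) //= /pi0 eqxx rmorph1 scale1r big1 ?addr0 // => x /negbTE ->.
    by rewrite rmorph0 scale0r.
  have key : (\big[Order.max/-oo]_(x : X) Dinf (rho x) (rho x0) <= pairQleak rho)%E.
    rewrite /pairQleak; apply: bigmax_le => [|x _]; first exact: leNye.
    have h1 : (Dinf (rho x) (rho x0) <= \big[Order.max/-oo]_(x' : X) Dinf (rho x) (rho x'))%E :=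
      le_bigmax _ (fun x' => Dinf (rho x) (rho x')) x0.
    have h2 : (\big[Order.max/-oo]_(x' : X) Dinf (rho x) (rho x') <=
               \big[Order.max/-oo]_(x : X) \big[Order.max/-oo]_(x' : X) Dinf (rho x) (rho x'))%E :=
      le_bigmax _ (fun x => \big[Order.max/-oo]_(x' : X) Dinf (rho x) (rho x'))%E x.
    exact: le_trans h1 h2.
  have mem : (ereal_inf [set v : \bar R | exists pi : X -> R, Defs.pmf pi /\
     v = (\big[Order.max/-oo]_(x : X)
             Dinf (rho x) (\sum_(x' : X) (pi x')%:C *: rho x'))%E]
        <= \big[Order.max/-oo]_(x : X) Dinf (rho x) (rho x0))%E.
    apply: ge_ereal_inf.
    exists (\big[Order.max/-oo]_(x : X) Dinf (rho x) (rho x0))%E => //.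
    exists pi0; split; first exact: hpi0.
    by rewrite hsig.
  exact: (le_trans mem key).
Qed.
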